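(* The maps $\psi_s : \mathbf{ASM}^\star \to \mathbb{K}(q)$ and $\psi_{s'} : \mathbf{ASM}^\star \to \mathbb{K}(q)$ linearly defined, for any $s \in \{\operatorname{io}, \operatorname{oi}\}$, any $s' \in \{\operatorname{se}, \operatorname{nw}, \operatorname{sw}, \operatorname{ne}\}$, and any ASM $\delta$ of size $n$ by $\psi_s(\mathbf{F}^\star_{M^\delta}) := \frac{q^{s(\delta)}}{n!}$ and $\psi_{s'}(\mathbf{F}^\star_{M^\delta}) := \frac{q^{s'(\delta)}}{[n]_q!}$ are algebra morphisms.
   Context: Let $\mathbb{K}$ be a field of characteristic zero; $[n]_q := 1 + q + \dots + q^{n-1}$, $[n]_q! := [1]_q \cdots [n]_q$, $[0]_q! := 1$. An alternating sign matrix (ASM) of size $n$ is an $n\times n$ matrix with entries in $\{0,+,-\}$ (read as $0,1,-1$) such that every row and column starts and ends (ignoring zeros) with $+$ and in each row and column the $+$ and $-$ alternate. For an ASM $\delta$, $M^\delta$ is the $\{0,1\}$-matrix with $M^\delta_{ij}=1$ iff $\delta_{ij}\neq 0$. $\mathbf{ASM}$ is the Hopf algebra spanned by the $\mathbf{F}_{M^\delta}$ (a Hopf subalgebra of the Hopf algebra of $1$-packed matrices, graded by size), and $\mathbf{ASM}^\star$ is its graded dual, with $(\mathbf{F}^\star_{M^\delta})$ the adjoint basis; its product is $\mathbf{F}^\star_{M_1}\cdot\mathbf{F}^\star_{M_2} = \sum \mathbf{F}^\star_M$ over all $M$ obtained by shuffling the rows of $[M_1 \mid 0_{n_1\times n_2}]$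 with the rows of $[0_{n_2\times n_1}\mid M_2]$, $n_i$ the sizes. Via the bijection between ASMs and six-vertex configurations with domain wall boundary conditions, $\operatorname{oi}(\delta)$ is the number of $+$ entries and $\operatorname{io}(\delta)$ the number of $-$ entries of $\delta$; zero entries correspond to the four vertex types $\operatorname{ne}$ (vertical edges pointing up, horizontal edges pointing right), $\operatorname{nw}$ (up, left), $\operatorname{se}$ (down, right), $\operatorname{sw}$ (down, left). Equivalently, for a zero entry $\delta_{ij}$, with $r = \sum_{j'<j}\delta_{ij'}$ and $c = \sum_{i'<i}\delta_{i'j}$, its type is $\operatorname{ne}$ if $(r,c)=(0,0)$, $\operatorname{nw}$ if $(1,0)$, $\operatorname{se}$ if $(0,1)$, $\operatorname{sw}$ if $(1,1)$; $s'(\delta)$ counts the zero entries of type $s'$. *)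

(* Defs.v *)
From HB Require Import structures.
From mathcomp Require Import all_boot all_order all_algebra.
Set Implicit Arguments. Unset Strict Implicit. Unset Printing Implicit Defensive.
Import Order.TTheory GRing.Theory Num.Theory.
Local Open Scope ring_scope.

(* A square matrix of size n with integer entries (+ = 1, - = -1, 0 = 0).      *)

Definition alt_pm (s : seq int) : bool :=
  odd (size s) && all (fun k => s`_k == (-1) ^+ k) (iota 0 (size s)).

Definition nonzeros (s : seq int) : seq int := [seq x <- s | x != 0].

Definition is_asm (n : nat) (A : 'M[int]_n) : bool :=
  [forall i : 'I_n, alt_pm (nonzeros [seq A i j | j <- enum 'I_n])] &&
  [forall j : 'I_n, alt_pm (nonzeros [seq A i j | i <- enum 'I_n])].

(* A (candidate) basis index: a square matrix of some size. *)
Definition asmT := {n : nat & 'M[int]_n}.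
Definition asm_size (d : asmT) : nat := tag d.
Definition is_asmT (d : asmT) : bool := is_asm (tagged d).

Definition asm0 : asmT := Tagged (fun n => 'M[int]_n) (0 : 'M[int]_0).

Definition oi (n : nat) (A : 'M[int]_n) : nat :=
  #|[set p : 'I_n * 'I_n | A p.1 p.2 == 1]|.
Definition io (n : nat) (A : 'M[int]_n) : nat :=
  #|[set p : 'I_n * 'I_n | A p.1 p.2 == -1]|.

Definition rsum (n : nat) (A : 'M[int]_n) (i j : 'I_n) : int :=
  \sum_(j' < n | (j' < j)%N) A i j'.
Definition csum (n : nat) (A : 'M[int]_n) (i j : 'I_n) : int :=
  \sum_(i' < n | (i' < i)%N) A i' j.

Definition zero_type (a b : int) (n : nat) (A : 'M[int]_n) : nat :=
  #|[set p : 'I_n * 'I_n |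
      [&& A p.1 p.2 == 0, rsum A p.1 p.2 == a & csum A p.1 p.2 == b]]|.

Inductive stat_s := S_io | S_oi.
Inductive stat_s' := S_se | S_nw | S_sw | S_ne.

Definition stat_of_s (s : stat_s) (n : nat) (A : 'M[int]_n) : nat :=
  match s with S_io => io A | S_oi => oi A end.

Definition stat_of_s' (s : stat_s') (n : nat) (A : 'M[int]_n) : nat :=
  match s with
  | S_ne => zero_type 0 0 A
  | S_nw => zero_type 1 0 A
  | S_se => zero_type 0 1 A
  | S_sw => zero_type 1 1 A
  end.

(* ---------- the algebra ASM^* (formal K-linear combinations of basis
   elements F*_{M^delta}, indexed by the ASM delta) ---------- *)
Definition formal (K : fieldType) := seq (K * asmT).

Definition asm_elt (K : fieldType) (x : formal K) : bool :=
  all (fun p => is_asmT p.2) x.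

Definition mxget (n : nat) (A : 'M[int]_n) (i j : nat) : int :=
  match @insub _ (fun k => (k < n)%N) 'I_n i,
        @insub _ (fun k => (k < n)%N) 'I_n j with
  | Some i', Some j' => A i' j'
  | _, _ => 0
  end.

Definition rk (N : nat) (Sh : {set 'I_N}) (i : 'I_N) : nat :=
  #|[set k in Sh | (k < i)%N]|.

(* Shuffle of the rows of [A1 | 0] (placed at rows in S) with the rows of
   [0 | A2] (placed at rows outside S), both keeping their order. *)
Definition shuffle_mx (n1 n2 : nat) (A1 : 'M[int]_n1) (A2 : 'M[int]_n2)
    (Sh : {set 'I_(n1 + n2)}) : 'M[int]_(n1 + n2) :=
  \matrix_(i, j)
    if i \in Sh then (if (j < n1)%N then mxget A1 (rk Sh i) j else 0)
    else (if (n1 <= j)%N then mxget A2 (rk (~: Sh) i) (j - n1) else 0).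

Definition shuffles (d1 d2 : asmT) : seq asmT :=
  [seq Tagged (fun n => 'M[int]_n) (shuffle_mx (tagged d1) (tagged d2) Sh)
  | Sh <- enum [set Sh : {set 'I_(tag d1 + tag d2)} | #|Sh| == tag d1]].

(* product of ASM^*: bilinear extension of
   F*_{M1} . F*_{M2} = sum over shuffles *)
Definition fmul (K : fieldType) (x y : formal K) : formal K :=
  flatten [seq [seq (p.1 * p'.1, d) | d <- shuffles p.2 p'.2]
          | p <- x, p' <- y].

Definition funit (K : fieldType) : formal K := [:: (1, asm0)].

Definition ratfun (K : fieldType) := {fraction {poly K}}.
Definition qvar (K : fieldType) : ratfun K := tofrac ('X : {poly K}).
Definition cst (K : fieldType) (a : K) : ratfun K := tofrac (a%:P).

Definition qint (K : fieldType) (n : nat) : ratfun K :=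
  \sum_(i < n) qvar K ^+ i.
Definition qfact (K : fieldType) (n : nat) : ratfun K :=
  \prod_(1 <= k < n.+1) qint K k.

Definition psi_s_basis (K : fieldType) (s : stat_s) (d : asmT) : ratfun K :=
  qvar K ^+ stat_of_s s (tagged d) / (tag d)`!%:R.
Definition psi_s'_basis (K : fieldType) (s : stat_s') (d : asmT) : ratfun K :=
  qvar K ^+ stat_of_s' s (tagged d) / qfact K (tag d).

Definition lin_ext (K : fieldType) (f : asmT -> ratfun K) (x : formal K)
  : ratfun K := \sum_(p <- x) cst p.1 * f p.2.

Definition is_alg_morphism (K : fieldType) (f : asmT -> ratfun K) : Prop :=
  lin_ext f (funit K) = 1 /\
  forall x y : formal K, asm_elt x -> asm_elt y ->
    lin_ext f (fmul x y) = lin_ext f x * lin_ext f y.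

(* Main.v *)
Require Import Defs.
From HB Require Import structures.
From mathcomp Require Import all_boot all_order all_algebra.
From mathcomp Require Import zify ring.
Set Implicit Arguments. Unset Strict Implicit. Unset Printing Implicit Defensive.
Import Order.TTheory GRing.Theory Num.Theory.

Section Rk.
Variable N : nat.
Implicit Types (T : {set 'I_N}) (i : 'I_N).

Lemma rk_lt T i : i \in T -> rk T i < #|T|.
Proof.
move=> iT; rewrite /rk (cardsD1 i T) iT add1n ltnS.
apply: subset_leq_card; apply/subsetP => k; rewrite !inE => /andP[kT ki].
by rewrite kT andbT; apply: contraTneq ki => ->; rewrite ltnn.
Qed.

Lemma rk_mono T i i' : i' \in T -> (i' < i)%N -> rk T i' < rk T i.
Proof.
move=> iT lt; rewrite /rk; apply: proper_card; apply/properP; split.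
  apply/subsetP => k; rewrite !inE => /andP[-> /= ki]; exact: ltn_trans lt.
by exists i'; rewrite !inE ?iT ?lt ?ltnn.
Qed.

Lemma rk_inj T : {in T &, injective (rk T)}.
Proof.
move=> i i' iT i'T e; case: (ltngtP i i') => h; last exact: val_inj.
  by move: (rk_mono iT h); rewrite e ltnn.
by move: (rk_mono i'T h); rewrite e ltnn.
Qed.

Lemma rk_perm T : perm_eq (map (rk T) (enum T)) (iota 0 #|T|).
Proof.
have u : uniq (map (rk T) (enum T)).
  rewrite map_inj_in_uniq ?enum_uniq // => x y; rewrite !mem_enum; exact: rk_inj.
apply: uniq_perm => //; first exact: iota_uniq.
have h1 : {subset map (rk T) (enum T) <= iota 0 #|T|}.
  by move=> x /mapP[y]; rewrite mem_enum mem_iota add0n => yT ->; rewrite rk_lt.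
have h2 : size (iota 0 #|T|) <= size (map (rk T) (enum T)).
  by rewrite size_iota size_map cardE.
exact: (uniq_min_size u h1 h2).2.
Qed.

Lemma reidx (R : Type) (idx : R) (op : Monoid.com_law idx) T (F : nat -> R) :
  \big[op/idx]_(i in T) F (rk T i) = \big[op/idx]_(k < #|T|) F k.
Proof.
rewrite -big_enum -(big_map (rk T) xpredT) (perm_big _ (rk_perm T)).
by rewrite -{1}(subn0 #|T|) big_mkord.
Qed.

Lemma reidx_lt (R : Type) (idx : R) (op : Monoid.com_law idx) T i (F : nat -> R) :
  \big[op/idx]_(i' in T | (i' < i)%N) F (rk T i') = \big[op/idx]_(k < rk T i) F k.
Proof.
have -> : rk T i = #|[set k in T | (k < i)%N]| by [].
rewrite -(reidx op [set k in T | (k < i)%N] F).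
apply: eq_big => [k|k]; first by rewrite inE.
move=> /andP[kT ki]; congr F; rewrite /rk.
apply: eq_card => x; rewrite !inE.
case: (x \in T) => //=; case xk: (x < k); rewrite ?andbF ?andbT //.
by rewrite (ltn_trans xk ki).
Qed.
Lemma reidxn T (F : nat -> nat) : (\sum_(i in T) F (rk T i) = \sum_(k < #|T|) F k)%N.
Proof. exact: reidx. Qed.
End Rk.
Local Open Scope ring_scope.

Definition RS n (A : 'M[int]_n) (k j : nat) : int := \sum_(j' < j) mxget A k j'.
Definition CS n (A : 'M[int]_n) (k j : nat) : int := \sum_(k' < k) mxget A k' j.

Lemma mxgetE n (A : 'M[int]_n) (i j : 'I_n) : mxget A i j = A i j.
Proof.
rewrite /mxget (@insubT _ (fun k => (k < n)%N) _ i (ltn_ord i)).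
rewrite (@insubT _ (fun k => (k < n)%N) _ j (ltn_ord j)) /=.
by congr (A _ _); apply: val_inj.
Qed.

Lemma mxget0 n (A : 'M[int]_n) (i j : nat) : (n <= i)%N || (n <= j)%N -> mxget A i j = 0.
Proof.
rewrite /mxget; case/orP => h.
  by rewrite insubF // ltnNge h.
by case: insub => //; rewrite insubF // ltnNge h.
Qed.

Lemma rsumE n (A : 'M[int]_n) (i j : 'I_n) : rsum A i j = RS A i j.
Proof.
rewrite /RS (big_ord_widen _ _ (ltnW (ltn_ord j))) /rsum.
by apply: eq_bigr => k _; rewrite mxgetE.
Qed.

Lemma csumE n (A : 'M[int]_n) (i j : 'I_n) : csum A i j = CS A i j.
Proof.
rewrite /CS (big_ord_widen _ (fun k => mxget A k j) (ltnW (ltn_ord i))) /csum.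
by apply: eq_bigr => k _; rewrite mxgetE.
Qed.

Definition statP (P : int -> int -> int -> bool) n (A : 'M[int]_n) : nat :=
  #|[set p : 'I_n * 'I_n | P (A p.1 p.2) (rsum A p.1 p.2) (csum A p.1 p.2)]|.

Lemma statE P n (A : 'M[int]_n) : statP P A =
  (\sum_(k < n) \sum_(j < n) P (mxget A k j) (RS A k j) (CS A k j))%N.
Proof.
rewrite /statP -sum1_card big_mkcond /= pair_big /=.
by apply: eq_bigr => -[i j] _; rewrite inE /= mxgetE rsumE csumE; case: P.
Qed.

Lemma statE0 P n (A : 'M[int]_n) : statP P A =
  (\sum_(i < n) \sum_(j < n) P (A i j) (rsum A i j) (csum A i j))%N.
Proof.
rewrite /statP -sum1_card big_mkcond /= pair_big /=.
by apply: eq_bigr => -[i j] _; rewrite inE /=; case: P.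
Qed.

Section Shuffle.
Variables (n1 n2 : nat) (A1 : 'M[int]_n1) (A2 : 'M[int]_n2).
Variable Sh : {set 'I_(n1 + n2)}.
Hypothesis cardSh : #|Sh| = n1.
Hypothesis rowA1 : forall k, (k < n1)%N -> RS A1 k n1 = 1.
Local Notation M := (shuffle_mx A1 A2 Sh).

Lemma M_l i (j1 : 'I_n1) : M i (lshift n2 j1) = if i \in Sh then mxget A1 (rk Sh i) j1 else 0.
Proof. by rewrite mxE /= ltn_ord leqNgt ltn_ord. Qed.

Lemma M_r i (j2 : 'I_n2) : M i (rshift n1 j2) = if i \in Sh then 0 else mxget A2 (rk (~: Sh) i) j2.
Proof.
have h : (n1 <= n1 + j2)%N := leq_addr _ _.
rewrite mxE /=; case: (i \in Sh); first by rewrite ifF // ltnNge h.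
by rewrite ifT // addKn.
Qed.

Lemma rsum_l i (j1 : 'I_n1) : rsum M i (lshift n2 j1) = if i \in Sh then RS A1 (rk Sh i) j1 else 0.
Proof.
rewrite /rsum big_split_ord /= [X in _ + X]big_pred0 => [|j]; last first.
  have h : (j1 <= n1 + j)%N := leq_trans (ltnW (ltn_ord j1)) (leq_addr _ _).
  by rewrite ltnNge h.
rewrite addr0 /RS (big_ord_widen _ (fun j => mxget A1 (rk Sh i) j) (ltnW (ltn_ord j1))).
case iS: (i \in Sh); last by rewrite big1 // => j _; rewrite M_l iS.
by apply: eq_bigr => j _; rewrite M_l iS.
Qed.

Lemma rsum_r i (j2 : 'I_n2) : rsum M i (rshift n1 j2) =
  if i \in Sh then RS A1 (rk Sh i) n1 else RS A2 (rk (~: Sh) i) j2.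
Proof.
rewrite /rsum big_split_ord /=.
rewrite (eq_bigl xpredT) => [|j]; last by rewrite /= (leq_trans (ltn_ord j)) ?leq_addr.
have e : forall j : 'I_n2, (n1 + j < n1 + j2)%N = (j < j2)%N := fun j => ltn_add2l _ _ _.
rewrite (eq_bigl _ _ e).
case iS: (i \in Sh).
  rewrite [X in _ + X]big1 ?addr0 => [|j _]; last by rewrite M_r iS.
  by apply: eq_bigr => j _; rewrite M_l iS.
rewrite big1 ?add0r => [|j _]; last by rewrite M_l iS.
rewrite /RS (big_ord_widen _ (fun j => mxget A2 (rk (~: Sh) i) j) (ltnW (ltn_ord j2))).
by apply: eq_bigr => j _; rewrite M_r iS.
Qed.

Lemma csum_l i (j1 : 'I_n1) : csum M i (lshift n2 j1) = CS A1 (rk Sh i) j1.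
Proof.
rewrite /csum /CS -(reidx_lt _ _ _ (fun k => mxget A1 k j1)).
rewrite [RHS]big_mkcondl /=.
by apply: eq_bigr => k _; rewrite M_l.
Qed.

Lemma csum_r i (j2 : 'I_n2) : csum M i (rshift n1 j2) = CS A2 (rk (~: Sh) i) j2.
Proof.
rewrite /csum /CS -(reidx_lt _ _ _ (fun k => mxget A2 k j2)).
rewrite [RHS]big_mkcondl /=.
by apply: eq_bigr => k _; rewrite M_r inE; case: (k \in Sh).
Qed.

Lemma cardShC : #|~: Sh| = n2.
Proof. by have := cardsC Sh; rewrite card_ord cardSh => /eqP; rewrite eqn_add2l => /eqP. Qed.

Lemma shuffle_stat P :
  statP P M = (statP P A1 + statP P A2 +
     \sum_(i in Sh) \sum_(j < n2) P 0 1 (CS A2 (rk (~: Sh) i) j) +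
     \sum_(i in ~: Sh) \sum_(j < n1) P 0 0 (CS A1 (rk Sh i) j))%N.
Proof.
have rowS : forall i, i \in Sh ->
   (\sum_(j < n1 + n2) P (M i j) (rsum M i j) (csum M i j) =
   \sum_(j < n1) P (mxget A1 (rk Sh i) j) (RS A1 (rk Sh i) j) (CS A1 (rk Sh i) j) +
   \sum_(j < n2) P 0 1 (CS A2 (rk (~: Sh) i) j))%N.
  move=> i iS; rewrite big_split_ord /=; congr (_ + _)%N; apply: eq_bigr => j _.
    by rewrite M_l rsum_l csum_l iS.
  by rewrite M_r rsum_r csum_r iS rowA1 // -{2}cardSh rk_lt.
have rowN : forall i, i \in ~: Sh ->
   (\sum_(j < n1 + n2) P (M i j) (rsum M i j) (csum M i j) =
   \sum_(j < n1) P 0 0 (CS A1 (rk Sh i) j) +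
   \sum_(j < n2) P (mxget A2 (rk (~: Sh) i) j) (RS A2 (rk (~: Sh) i) j) (CS A2 (rk (~: Sh) i) j))%N.
  move=> i; rewrite inE => /negbTE iS; rewrite big_split_ord /=; congr (_ + _)%N; apply: eq_bigr => j _.
    by rewrite M_l rsum_l csum_l iS.
  by rewrite M_r rsum_r csum_r iS.
rewrite statE0 (bigID (fun i => i \in Sh)) /=.
rewrite (eq_bigl (fun i => i \in ~: Sh) _ (fun i => ltac:(by rewrite /= in_setC))).
rewrite (eq_bigr _ rowS) (eq_bigr _ rowN) !big_split /=.
rewrite (reidxn Sh (fun k => \sum_(j < n1) P (mxget A1 k j) (RS A1 k j) (CS A1 k j))%N).
rewrite (reidxn (~: Sh) (fun k => \sum_(j < n2) P (mxget A2 k j) (RS A2 k j) (CS A2 k j))%N).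
rewrite cardSh cardShC !statE.
rewrite -!addnA; congr (_ + _)%N; by rewrite [RHS]addnC -addnA.
Qed.

End Shuffle.

Lemma sum_take_alt (t : seq int) r :
  (forall k, (k < size t)%N -> t`_k = (-1) ^+ k) -> (r <= size t)%N ->
  \sum_(x <- take r t) x = (odd r)%:R.
Proof.
move=> ht; elim: r => [|r IH] lt; first by rewrite take0 big_nil.
rewrite (take_nth 0) // -cats1 big_cat big_seq1 IH ?(ltnW lt) // ht //.
by rewrite -signr_odd /=; case: (odd r) => /=; rewrite ?addr0 ?subrr.
Qed.

Lemma alt_prefix (s : seq int) p : alt_pm (nonzeros s) ->
  exists2 r, (r <= size (nonzeros s))%N & \sum_(x <- take p s) x = (odd r)%:R.
Proof.
case/andP=> _ /allP ha.
have ht : forall k, (k < size (nonzeros s))%N -> (nonzeros s)`_k = (-1) ^+ k.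
  by move=> k lk; apply/eqP; apply: ha; rewrite mem_iota add0n.
have e : nonzeros s = nonzeros (take p s) ++ nonzeros (drop p s).
  by rewrite /nonzeros -filter_cat cat_take_drop.
exists (size (nonzeros (take p s))); first by rewrite e size_cat leq_addr.
rewrite -(sum_take_alt ht); last by rewrite e size_cat leq_addr.
rewrite [in RHS]e take_size_cat // /nonzeros big_filter.
by rewrite [RHS]big_mkcond; apply: eq_bigr => x _; case: eqP => // ->.
Qed.

Lemma alt_total (s : seq int) : alt_pm (nonzeros s) -> \sum_(x <- s) x = 1.
Proof.
move=> h; have := h; case/andP=> odd_t /allP ha.
have ht : forall k, (k < size (nonzeros s))%N -> (nonzeros s)`_k = (-1) ^+ k.
  by move=> k lk; apply/eqP; apply: ha; rewrite mem_iota add0n.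
transitivity (\sum_(x <- take (size (nonzeros s)) (nonzeros s)) x).
  by rewrite take_size /nonzeros big_filter [RHS]big_mkcond; apply: eq_bigr => x _; case: eqP => // ->.
by rewrite sum_take_alt // odd_t.
Qed.

Lemma sum_prefix (g : nat -> int) m j : (j <= m)%N ->
  \sum_(x <- take j (map g (iota 0 m))) x = \sum_(x < j) g x.
Proof.
move=> jm; rewrite -map_take take_iota (minn_idPl jm) big_map.
by rewrite -(big_mkord xpredT) /index_iota subn0.
Qed.

Section ASM.
Variables (m : nat) (A : 'M[int]_m).
Hypothesis hA : is_asm A.

Lemma row_seq (i : 'I_m) : [seq A i j | j <- enum 'I_m] = map (mxget A i) (iota 0 m).
Proof. by rewrite -val_enum_ord -map_comp; apply: eq_map => j /=; rewrite mxgetE. Qed.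

Lemma col_seq (j : 'I_m) : [seq A i j | i <- enum 'I_m] = map (fun k => mxget A k j) (iota 0 m).
Proof. by rewrite -val_enum_ord -map_comp; apply: eq_map => i /=; rewrite mxgetE. Qed.

Lemma asm_row k : (k < m)%N -> RS A k m = 1.
Proof.
move=> km; case/andP: hA => /forallP /(_ (Ordinal km)) h _.
rewrite row_seq in h; have := alt_total h.
by rewrite -(take_size (map _ _)) size_map size_iota sum_prefix.
Qed.

Lemma asm_col k j : (k <= m)%N -> (j < m)%N -> (CS A k j == 0) || (CS A k j == 1).
Proof.
move=> km jm; case/andP: hA => _ /forallP /(_ (Ordinal jm)) h.
rewrite col_seq in h; have [r _] := alt_prefix k h.
rewrite sum_prefix // => /= e; rewrite /CS e; by case: (odd r).
Qed.

Lemma asm_colsum k : (k <= m)%N -> \sum_(j < m) CS A k j = k%:R.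
Proof.
move=> km; rewrite /CS exchange_big /=.
rewrite (eq_bigr (fun _ => 1)) => [|i _]; last exact: (asm_row (leq_trans (ltn_ord i) km)).
by rewrite sumr_const card_ord.
Qed.

Lemma asm_count1 k : (k <= m)%N -> (\sum_(j < m) (CS A k j == 1) = k)%N.
Proof.
move=> km; apply/eqP; rewrite -(eqr_nat int) natr_sum -(asm_colsum km).
apply/eqP; apply: eq_bigr => j _; have := asm_col km (ltn_ord j).
by case/orP => /eqP ->.
Qed.

Lemma asm_count0 k : (k <= m)%N -> (\sum_(j < m) (CS A k j == 0) = m - k)%N.
Proof.
move=> km.
have : (\sum_(j < m) (CS A k j == 0) + \sum_(j < m) (CS A k j == 1) = m)%N.
  rewrite -big_split /= -[RHS]card_ord -sum1_card; apply: eq_bigr => j _.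
  by have := asm_col km (ltn_ord j); case/orP => /eqP ->.
move=> e; have := asm_count1 km; lia.
Qed.
End ASM.

Definition invc (c : bool) (b : seq bool) : nat :=
  (\sum_(i < size b) \sum_(k < size b | (k < i)%N)
     ((nth false b k == c) && (nth false b i == ~~ c)))%N.

Fixpoint allbs (n : nat) : seq (seq bool) :=
  if n is n'.+1 then [seq true :: b | b <- allbs n'] ++ [seq false :: b | b <- allbs n']
  else [:: [::]].

Lemma count_nth_sum (a : pred bool) (b : seq bool) :
  (\sum_(i < size b) a (nth false b i) = count a b)%N.
Proof.
elim: b => [|x b IH]; first by rewrite big_ord0.
by rewrite /= big_ord_recl /= IH.
Qed.

Lemma inv_cons c x b :
  invc c (x :: b) = ((x == c) * count (fun y => y == ~~ c) b + invc c b)%N.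
Proof.
rewrite /invc /= big_ord_recl /= big_pred0 // add0n.
rewrite (eq_bigr (fun i : 'I_(size b) => (x == c) && (nth false b i == ~~ c) +
   \sum_(k < size b | (k < i)%N) ((nth false b k == c) && (nth false b i == ~~ c)))%N).
  rewrite big_split /=; congr (_ + _)%N.
  rewrite -count_nth_sum; case: (x == c); rewrite ?mul1n ?mul0n //.
  by rewrite big1.
move=> i _; rewrite big_mkcond big_ord_recl /= [in RHS]big_mkcond; congr (_ + _)%N.
Qed.

Lemma size_allbs n b : b \in allbs n -> size b = n.
Proof.
elim: n b => [|n IH] b /=; first by rewrite inE => /eqP ->.
by rewrite mem_cat => /orP[] /mapP[b' /IH <- ->].
Qed.

Lemma cons_inj (c : bool) : injective (cons c).
Proof. by move=> x y []. Qed.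

Lemma allbs_uniq n : uniq (allbs n).
Proof.
elim: n => //= n IH; rewrite cat_uniq !(map_inj_uniq (@cons_inj _)) IH /=.
rewrite andbT; apply/hasPn => b /mapP[b0 _ ->]; apply/negP => /mapP[b1 _] //.
Qed.

Lemma mem_allbs n b : (b \in allbs n) = (size b == n).
Proof.
apply/idP/idP => [/size_allbs -> //|/eqP <-].
elim: b => [|x b IH]; first by rewrite /= mem_seq1.
by rewrite mem_cat; case: x; rewrite (mem_map (@cons_inj _)) IH ?orbT.
Qed.

Section Q.
Variable K : fieldType.
Local Notation q := (qvar K).
Local Notation Q := (ratfun K).

Lemma qfact0 : qfact K 0 = 1.
Proof. by rewrite /qfact big_geq. Qed.

Lemma qfactS n : qfact K n.+1 = qfact K n * qint K n.+1.
Proof. by rewrite /qfact big_nat_recr. Qed.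

Lemma qint_add a b : qint K (a + b) = qint K a + q ^+ a * qint K b.
Proof.
rewrite /qint big_split_ord /= mulr_sumr; congr (_ + _).
by apply: eq_bigr => i _; rewrite exprD.
Qed.

Lemma qint_neq0 n : (0 < n)%N -> qint K n != 0.
Proof.
case: n => [//|n] _.
have -> : qint K n.+1 = tofrac (\sum_(i < n.+1) ('X^i : {poly K})).
  rewrite rmorph_sum /qint; apply: eq_bigr => i _; rewrite rmorphXn; reflexivity.
rewrite tofrac_eq0; apply/negP => /eqP h; have := congr1 (fun p : {poly K} => p`_0) h.
rewrite coef_sum big_ord_recl /= coefXn /= big1 ?addr0 ?coef0 => [|i _]; last by rewrite coefXn.
move/eqP; exact/negP/oner_neq0.
Qed.

Lemma qfact_neq0 n : qfact K n != 0.
Proof.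
elim: n => [|n IH]; first by rewrite qfact0; exact: oner_neq0.
rewrite qfactS; apply: mulf_neq0; first exact: IH.
exact: qint_neq0.
Qed.

Definition S (c : bool) (n k : nat) : Q :=
  \sum_(b <- allbs n | count id b == k) q ^+ invc c b.

Lemma S_rec c n k : S c n.+1 k =
  (if k is k'.+1 then (if c then q ^+ (n - k') else 1) * S c n k' else 0) +
  (if c then 1 else q ^+ k) * S c n k.
Proof.
rewrite /S /= big_cat !big_map /=; congr (_ + _).
  case: k => [|k']; first by rewrite big_pred0 // => b; rewrite add1n.
  rewrite mulr_sumr big_seq_cond [RHS]big_seq_cond /=.
  apply: eq_big => [b|b]; first by rewrite add1n eqSS.
  case/andP => /size_allbs sb; rewrite /= add1n eqSS => /eqP cb; rewrite inv_cons exprD; case: c => /=.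
    rewrite mul1n (eq_count (a2 := negb)) => [|y]; last by rewrite eqbF_neg.
    rewrite -sb -cb -(count_predC id b) addKn; reflexivity.
  rewrite mul0n expr0; reflexivity.
rewrite mulr_sumr big_seq_cond [RHS]big_seq_cond /=.
apply: eq_big => [b|b]; first by rewrite add0n.
case/andP => _; rewrite /= add0n => /eqP cb; rewrite inv_cons exprD; case: c => /=.
  rewrite mul0n expr0; reflexivity.
rewrite mul1n (eq_count (a2 := id)) => [|y]; last by rewrite eqb_id.
rewrite cb; reflexivity.
Qed.
Lemma S_big c n k : (n < k)%N -> S c n k = 0.
Proof.
move=> nk; rewrite /S big_seq_cond big_pred0 // => b.
apply/negbTE/andP => -[/size_allbs sb /eqP cb].
move: (count_size id b); rewrite sb cb; lia.
Qed.

Lemma S_00 c : S c 0 0 = 1.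
Proof.
rewrite /S /= big_cons big_nil /= /invc /= big_ord0 expr0 addr0; reflexivity.
Qed.

Lemma cancel_qf (x : Q) n : x * qfact K n = qfact K n -> x = 1.
Proof.
move=> h; apply: (mulIf (qfact_neq0 n)); rewrite mul1r; exact: h.
Qed.

Lemma S_fact c n k : (k <= n)%N -> S c n k * qfact K k * qfact K (n - k) = qfact K n.
Proof.
elim: n k => [|n IH] k kn.
  move: kn; rewrite leqn0 => /eqP ->; rewrite S_00 qfact0 !mul1r; reflexivity.
rewrite S_rec; case: k kn => [|k'] kn.
  have S0 : S c n 0 = 1.
    apply: (@cancel_qf _ n); have := IH 0%N (leq0n n); rewrite qfact0 mulr1 subn0; exact.
  rewrite S0 add0r qfact0 subn0 mulr1; clear IH S0; case: c; rewrite ?expr0 !mul1r; reflexivity.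
rewrite ltnS in kn.
case: (ltngtP k' n) kn => // [lt|->] _; last first.
  have Snn : S c n n = 1.
    apply: (@cancel_qf _ n); have := IH n (leqnn n); rewrite subnn qfact0 mulr1; exact.
  rewrite Snn S_big // !subnn qfact0 mulr0 addr0 mulr1.
  clear IH Snn; case: c; rewrite ?expr0 !mul1r; reflexivity.
have Hx := IH k' (ltnW lt).
have Hy := IH k'.+1 lt.
rewrite subSS.
have [m em] : exists m, n = (k' + m.+1)%N by exists (n - k'.+1)%N; lia.
have e1 : (n - k' = m.+1)%N by lia.
have e2 : (n - k'.+1 = m)%N by lia.
rewrite e1 in Hx *; rewrite e2 in Hy.
move: Hx Hy; rewrite !qfactS.
set x := S c n k'; set y := S c n k'.+1.
move=> Hx Hy.
have e : forall A B : Q, (A * x + B * y) * (qfact K k' * qint K k'.+1) * (qfact K m * qint K m.+1)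
   = A * qint K k'.+1 * (x * qfact K k' * (qfact K m * qint K m.+1)) +
     B * qint K m.+1 * (y * (qfact K k' * qint K k'.+1) * qfact K m).
  move=> A B; ring.
rewrite e Hx Hy.
have en : (n.+1 = k'.+1 + m.+1)%N by lia.
rewrite [in qint K n.+1]en.
clear e Hx Hy; clearbody x y; clear x y IH.
case: c.
  rewrite [(k'.+1 + _)%N]addnC qint_add mul1r; ring.
rewrite qint_add mul1r; ring.
Qed.
End Q.

Local Open Scope nat_scope.
Section Bits.
Variable n : nat.
Implicit Types (Sh T : {set 'I_n}).

Definition bits Sh : seq bool := [seq i \in Sh | i <- enum 'I_n].

Lemma size_bits Sh : size (bits Sh) = n.
Proof. by rewrite size_map size_enum_ord. Qed.

Lemma nth_bits Sh (i : 'I_n) : nth false (bits Sh) i = (i \in Sh).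
Proof. by rewrite (nth_map i) ?nth_ord_enum // size_enum_ord. Qed.

Lemma card_sum T : #|T| = (\sum_(i : 'I_n) (i \in T))%N.
Proof. by rewrite -sum1_card big_mkcond; apply: eq_bigr => i _; case: (i \in T). Qed.

Lemma count_bits Sh : count id (bits Sh) = #|Sh|.
Proof.
rewrite -count_nth_sum card_sum size_bits.
by apply: eq_bigr => i _; rewrite nth_bits.
Qed.
Lemma bits_inj : injective bits.
Proof. by move=> S1 S2 e; apply/setP => i; rewrite -!nth_bits e. Qed.

Lemma bits_perm : perm_eq (map bits (index_enum {set 'I_n})) (allbs n).
Proof.
apply: uniq_perm; first by rewrite (map_inj_uniq bits_inj) index_enum_uniq.
  exact: allbs_uniq.
move=> b; rewrite mem_allbs; apply/mapP/eqP => [[S _ ->]|sb]; first exact: size_bits.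
exists [set i : 'I_n | nth false b i]; first by rewrite mem_index_enum.
apply: (@eq_from_nth _ false); first by rewrite size_bits.
move=> i; rewrite sb => lt; have := nth_bits [set i : 'I_n | nth false b i] (Ordinal lt).
by rewrite /= inE => ->.
Qed.

Lemma sum_bits (R : Type) (idx : R) (op : Monoid.com_law idx) (P : pred (seq bool)) (F : seq bool -> R) :
  \big[op/idx]_(Sh : {set 'I_n} | P (bits Sh)) F (bits Sh) = \big[op/idx]_(b <- allbs n | P b) F b.
Proof. by rewrite -(perm_big _ bits_perm) big_map. Qed.

Definition PT T : nat := \sum_(i : 'I_n) \sum_(k : 'I_n) [&& (k < i), k \in T & i \notin T].

Lemma rk_sum T (i : 'I_n) : rk T i = \sum_(k : 'I_n) ((k < i) && (k \in T)).
Proof.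
rewrite /rk -sum1_card big_mkcond; apply: eq_bigr => k _; rewrite inE andbC.
by case: (_ && _).
Qed.

Lemma L1 T : \sum_(i in ~: T) rk T i = PT T.
Proof.
rewrite big_mkcond; apply: eq_bigr => i _; rewrite rk_sum inE.
case: (i \in T) => /=; first by rewrite big1 // => k _; rewrite !andbF.
by apply: eq_bigr => k _; rewrite andbT.
Qed.

Lemma L2 T : \sum_(i in ~: T) (#|T| - rk T i) = PT (~: T).
Proof.
rewrite /PT [RHS]exchange_big /= big_mkcond; apply: eq_bigr => i _; rewrite inE.
case iT: (i \in T) => /=; first by rewrite big1 // => k _; rewrite andbF.
rewrite rk_sum card_sum.
have e : forall k : 'I_n, (k \in T : nat) = ((k < i) && (k \in T)) + (~~ (k < i) && (k \in T)).
  by move=> k; case: (k < i); case: (k \in T).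
rewrite (eq_bigr _ (fun k _ => e k)) big_split /= addKn.
apply: eq_bigr => k _; rewrite !inE negbK.
case: (ltngtP k i) => h /=; rewrite ?andbF //.
by rewrite (val_inj h) iT.
Qed.

Lemma inv_bits c Sh : invc c (bits Sh) =
  \sum_(i : 'I_n) \sum_(k : 'I_n) [&& (k < i), (k \in Sh) == c & (i \in Sh) == ~~ c].
Proof.
rewrite /invc size_bits; apply: eq_bigr => i _; rewrite big_mkcond; apply: eq_bigr => k _.
by rewrite !nth_bits; case: (k < i).
Qed.

Lemma inv_true Sh : invc true (bits Sh) = PT Sh.
Proof.
rewrite inv_bits; apply: eq_bigr => i _; apply: eq_bigr => k _.
by case: (k \in Sh); case: (i \in Sh).
Qed.

Lemma inv_false Sh : invc false (bits Sh) = PT (~: Sh).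
Proof.
rewrite inv_bits; apply: eq_bigr => i _; apply: eq_bigr => k _; rewrite !inE.
by case: (k \in Sh); case: (i \in Sh).
Qed.
End Bits.

Local Open Scope ring_scope.

Lemma rk_le N (T : {set 'I_N}) i : (rk T i <= #|T|)%N.
Proof. by apply: subset_leq_card; apply/subsetP => k; rewrite inE => /andP[]. Qed.

Definition Ps (s : stat_s) : int -> int -> int -> bool :=
  match s with S_io => fun v _ _ => v == -1 | S_oi => fun v _ _ => v == 1 end.

Definition Ps' (s : stat_s') : int -> int -> int -> bool :=
  match s with
  | S_ne => fun v r c => [&& v == 0, r == 0 & c == 0]
  | S_nw => fun v r c => [&& v == 0, r == 1 & c == 0]
  | S_se => fun v r c => [&& v == 0, r == 0 & c == 1]
  | S_sw => fun v r c => [&& v == 0, r == 1 & c == 1]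
  end.

Lemma stat_sE s n (A : 'M[int]_n) : stat_of_s s A = statP (Ps s) A.
Proof. by case: s. Qed.

Lemma stat_s'E s n (A : 'M[int]_n) : stat_of_s' s A = statP (Ps' s) A.
Proof. by case: s. Qed.

Definition cs (s : stat_s') : bool :=
  match s with S_ne => false | S_nw => true | S_se => true | S_sw => false end.

Section Stats.
Variables (n1 n2 : nat) (A1 : 'M[int]_n1) (A2 : 'M[int]_n2).
Hypotheses (h1 : is_asm A1) (h2 : is_asm A2).
Variable Sh : {set 'I_(n1 + n2)}.
Hypothesis cardSh : #|Sh| = n1.

Lemma stat_s_shuffle s : statP (Ps s) (shuffle_mx A1 A2 Sh) = (statP (Ps s) A1 + statP (Ps s) A2)%N.
Proof.
rewrite shuffle_stat //; last by move=> k; exact: asm_row.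
by rewrite !big1 ?addn0 // => i _; rewrite big1 // => j _; case: s.
Qed.

Lemma stat_s'_shuffle s : statP (Ps' s) (shuffle_mx A1 A2 Sh) =
  (statP (Ps' s) A1 + statP (Ps' s) A2 + invc (cs s) (bits Sh))%N.
Proof.
rewrite shuffle_stat //; last by move=> k; exact: asm_row.
have k1 : forall i, (rk Sh i <= n1)%N by move=> i; have := rk_le Sh i; rewrite cardSh.
have k2 : forall i, (rk (~: Sh) i <= n2)%N by move=> i; have := rk_le (~: Sh) i; rewrite (cardShC cardSh).
rewrite -!addnA; congr (_ + (_ + _))%N.
case: s => /=.
- rewrite [X in (X + _)%N]big1 ?add0n => [|i _]; last by rewrite big1.
  rewrite (eq_bigr (fun i => rk Sh i)%N) => [|i _]; last first.
    by rewrite -[RHS](asm_count1 h1 (k1 i)); apply: eq_bigr => j _; rewrite ?eqxx.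
  by rewrite L1 inv_true.
- rewrite [X in (_ + X)%N]big1 ?addn0 => [|i _]; last by rewrite big1.
  rewrite (eq_bigr (fun i => #|~: Sh| - rk (~: Sh) i)%N) => [|i _]; last first.
    by rewrite (cardShC cardSh) -[RHS](asm_count0 h2 (k2 i)); apply: eq_bigr => j _; rewrite ?eqxx.
  rewrite -{1}(setCK Sh) L2 setCK inv_true; reflexivity.
- rewrite [X in (_ + X)%N]big1 ?addn0 => [|i _]; last by rewrite big1.
  rewrite (eq_bigr (fun i => rk (~: Sh) i)%N) => [|i _]; last first.
    by rewrite -[RHS](asm_count1 h2 (k2 i)); apply: eq_bigr => j _; rewrite ?eqxx.
  rewrite -{1}(setCK Sh) L1 inv_false; reflexivity.
- rewrite [X in (X + _)%N]big1 ?add0n => [|i _]; last by rewrite big1.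
  rewrite (eq_bigr (fun i => #|Sh| - rk Sh i)%N) => [|i _]; last first.
    by rewrite cardSh -[RHS](asm_count0 h1 (k1 i)); apply: eq_bigr => j _; rewrite ?eqxx.
  by rewrite L2 inv_false.
Qed.
End Stats.

Lemma alg1 (F : fieldType) (x y u v : F) (c : nat) : (c%:R : F) != 0 -> u != 0 -> v != 0 ->
  x * y / (c%:R * (u * v)) *+ c = x / u * (y / v).
Proof. move=> cz uz vz; rewrite -mulr_natr; field; rewrite cz uz vz //. Qed.

Lemma alg2 (F : fieldType) (x y u v w S : F) : u != 0 -> v != 0 -> w != 0 ->
  S * u * v = w -> x * y / w * S = x / u * (y / v).
Proof.
move=> uz vz wz e.
have Sz : S != 0 by apply: contraNneq wz => S0; rewrite -e S0 !mul0r.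
rewrite -e; field; rewrite Sz uz vz //.
Qed.

Section Final.
Variable K : fieldType.
Hypothesis hK : [pchar K] =i pred0.
Local Notation q := (qvar K).

Lemma shuffles_sum (F : asmT -> ratfun K) n1 n2 (A1 : 'M[int]_n1) (A2 : 'M[int]_n2) :
  \sum_(d <- shuffles (Tagged (fun n => 'M[int]_n) A1) (Tagged (fun n => 'M[int]_n) A2)) F d =
  \sum_(Sh in [set Sh : {set 'I_(n1 + n2)} | #|Sh| == n1])
      F (Tagged (fun n => 'M[int]_n) (shuffle_mx A1 A2 Sh)).
Proof. by rewrite /shuffles big_map big_enum. Qed.

Lemma natr_neq0 m : (0 < m)%N -> (m%:R : ratfun K) != 0.
Proof.
move=> m0; rewrite -(rmorph_nat (@tofrac _)) tofrac_eq0 -(rmorph_nat (@polyC K)) polyC_eq0.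
by rewrite ((pcharf0P K).1 hK m) -lt0n.
Qed.

Lemma psi_s_mul s n1 n2 (A1 : 'M[int]_n1) (A2 : 'M[int]_n2) : is_asm A1 -> is_asm A2 ->
  \sum_(d <- shuffles (Tagged (fun n => 'M[int]_n) A1) (Tagged (fun n => 'M[int]_n) A2)) psi_s_basis K s d =
  psi_s_basis K s (Tagged (fun n => 'M[int]_n) A1) * psi_s_basis K s (Tagged (fun n => 'M[int]_n) A2).
Proof.
move=> h1 h2; rewrite shuffles_sum.
rewrite (eq_bigr (fun _ => q ^+ (stat_of_s s A1 + stat_of_s s A2) / ((n1 + n2)`!)%:R)) => [|Sh]; last first.
  rewrite inE => /eqP hSh; rewrite /psi_s_basis /= !stat_sE stat_s_shuffle //.
rewrite sumr_const card_draws card_ord /psi_s_basis /=.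
have := bin_fact (leq_addr n2 n1); rewrite addKn => ef.
rewrite -ef !natrM exprD.
have f1 := natr_neq0 (fact_gt0 n1).
have f2 := natr_neq0 (fact_gt0 n2).
have f3 : ('C(n1 + n2, n1)%:R : ratfun K) != 0 by apply: natr_neq0; rewrite bin_gt0 leq_addr.
exact: (alg1 (q ^+ stat_of_s s A1) (q ^+ stat_of_s s A2) f3 f1 f2).
Qed.
Lemma psi_s'_mul s n1 n2 (A1 : 'M[int]_n1) (A2 : 'M[int]_n2) : is_asm A1 -> is_asm A2 ->
  \sum_(d <- shuffles (Tagged (fun n => 'M[int]_n) A1) (Tagged (fun n => 'M[int]_n) A2)) psi_s'_basis K s d =
  psi_s'_basis K s (Tagged (fun n => 'M[int]_n) A1) * psi_s'_basis K s (Tagged (fun n => 'M[int]_n) A2).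
Proof.
move=> h1 h2; rewrite shuffles_sum.
rewrite (eq_bigr (fun Sh => q ^+ (stat_of_s' s A1 + stat_of_s' s A2) / qfact K (n1 + n2) *
     q ^+ invc (cs s) (bits Sh))) => [|Sh]; last first.
  rewrite inE => /eqP hSh; rewrite /psi_s'_basis /= !stat_s'E stat_s'_shuffle // exprD.
  exact: mulrAC.
rewrite -mulr_sumr.
rewrite (eq_bigl (fun Sh : {set 'I_(n1 + n2)} => count id (bits Sh) == n1)) => [|Sh]; last first.
  by rewrite inE count_bits.
rewrite (sum_bits _ _ (fun b => count id b == n1) (fun b => q ^+ invc (cs s) b)).
change (\sum_(b <- allbs (n1 + n2) | count id b == n1) q ^+ invc (cs s) b) with (S K (cs s) (n1 + n2) n1).
have hS := S_fact K (cs s) (leq_addr n2 n1); rewrite addKn in hS.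
rewrite /psi_s'_basis /= exprD.
exact: (alg2 _ _ (qfact_neq0 K n1) (qfact_neq0 K n2) (qfact_neq0 K (n1 + n2)) hS).
Qed.
Lemma cstM (a b : K) : cst a * cst b = cst (a * b).
Proof. by rewrite /cst polyCM tofracM. Qed.

Lemma alg_morph_of (f : asmT -> ratfun K) : f asm0 = 1 ->
  (forall n1 n2 (A1 : 'M[int]_n1) (A2 : 'M[int]_n2), is_asm A1 -> is_asm A2 ->
     \sum_(d <- shuffles (Tagged (fun n => 'M[int]_n) A1) (Tagged (fun n => 'M[int]_n) A2)) f d =
     f (Tagged (fun n => 'M[int]_n) A1) * f (Tagged (fun n => 'M[int]_n) A2)) ->
  is_alg_morphism f.
Proof.
move=> f0 fm; split.
  rewrite /lin_ext /funit big_cons big_nil addr0 /= f0 mulr1 /cst polyC1 tofrac1; reflexivity.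
move=> x y /allP hx /allP hy.
rewrite /lin_ext /fmul big_flatten /= big_allpairs_dep /= big_distrl /=.
apply: eq_big_seq => p px; rewrite big_distrr /=.
apply: eq_big_seq => p' py; rewrite big_map /= -mulr_sumr.
move: (hx p px) (hy p' py); case: p px => a [n1 A1] /= _ h1.
case: p' py => b [n2 A2] /= _ h2.
rewrite fm // -cstM; exact: mulrACA.
Qed.
End Final.

Theorem proposition4p5 (K : fieldType) (hK : [pchar K] =i pred0) :
  (forall s : stat_s, is_alg_morphism (psi_s_basis K s)) /\
  (forall s' : stat_s', is_alg_morphism (psi_s'_basis K s')).
Proof.
split => s; apply: alg_morph_of.
- rewrite /psi_s_basis /= stat_sE statE big_ord0 expr0 fact0 invr1 mulr1; reflexivity.
- move=> n1 n2 A1 A2 h1 h2; exact: psi_s_mul.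
- rewrite /psi_s'_basis /= stat_s'E statE big_ord0 expr0 qfact0 invr1 mulr1; reflexivity.
- move=> n1 n2 A1 A2 h1 h2; exact: psi_s'_mul.
Qed.
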